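(* Let $K>0$, $\psi>0$, $E_{\max}>0$, $C>0$, and define, for $Q>\max\{1,C/E_{\max}\}$, $$\beta(Q)=K\sqrt{\frac{(e^{\psi Q}-e^{\psi})^3}{E_{\max}-C/Q}}.$$ On any interval of such $Q$ on which $3\psi^2e^{\psi}Q^2-2QE_{\max}+C\ge 0$ holds, the function $\beta$ is convex. Consequently, for every fixed $\kappa>0$ and $\varrho\in(0,1)$, the $\varrho$-quantile of $\mathrm{Gamma}(\kappa,\beta(Q))$ (shape $\kappa$, scale $\beta(Q)$) is a convex function of $Q$ on that interval.
   Context: For a Gamma distribution with shape $\kappa$ and scale $\beta$, the $\varrho$-quantile is $\beta\cdot\gamma^{-1}(\kappa,\Gamma(\kappa)\varrho)$. Here $\gamma(s,x)=\int_0^x t^{s-1}e^{-t}\,dt$ is the lower incomplete gamma function, $\gamma^{-1}$ denotes its inverse in the second argument, and $\Gamma$ is the Gamma function. *)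

(* Defs.v *)
From HB Require Import structures.
From mathcomp Require Import all_boot all_order all_algebra.
From mathcomp Require Import all_classical all_reals all_analysis.
Set Implicit Arguments. Unset Strict Implicit. Unset Printing Implicit Defensive.
Import Order.TTheory GRing.Theory Num.Theory.
Local Open Scope classical_set_scope.
Local Open Scope ring_scope.

Definition lower_gamma (R : realType) (s x : R) : R :=
  Rintegral (@lebesgue_measure R) `[0, x]
    (fun t => t `^ (s - 1) * expR (- t)).

Definition Gamma_fn (R : realType) (s : R) : R :=
  fine (\int[@lebesgue_measure R]_(t in (`[0%R, +oo[ : set R))
          ((t `^ (s - 1) * expR (- t))%:E))%E.

Definition lower_gamma_inv (R : realType) (s y : R) : R :=
  xget 0 [set x : R | 0 <= x /\ lower_gamma s x = y].

Definition gamma_quantile (R : realType) (kappa beta rho : R) : R :=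
  beta * lower_gamma_inv kappa (Gamma_fn kappa * rho).

Definition betaQ (R : realType) (K psi Emax C Q : R) : R :=
  K * Num.sqrt ((expR (psi * Q) - expR psi) ^+ 3 / (Emax - C / Q)).

Definition convex_on (R : realType) (I : set R) (f : R -> R) : Prop :=
  forall x y t, I x -> I y -> 0 <= t <= 1 ->
    f (t * x + (1 - t) * y) <= t * f x + (1 - t) * f y.

(* Main.v *)
Require Import Defs.
From HB Require Import structures.
From mathcomp Require Import all_boot all_order all_algebra.
From mathcomp Require Import all_classical all_reals all_analysis.
From mathcomp Require Import ring lra.

Import Order.TTheory GRing.Theory Num.Theory.
Local Open Scope classical_set_scope.
Local Open Scope ring_scope.
Lemma poly_ineq (R : realFieldType) (p q a b : R) : 0 <= p -> 0 <= q -> 0 <= a -> 0 <= b ->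
  (p*a^+2+q*b^+2)^+3 <= (p+q)*(p*a^+3+q*b^+3)^+2.
Proof.
move=> hp hq ha hb; rewrite -subr_ge0.
have -> : (p+q)*(p*a^+3+q*b^+3)^+2 - (p*a^+2+q*b^+2)^+3 =
  p*q*(p*a^+3*((a-b)^+2*(a+2*b)) + q*b^+3*((a-b)^+2*(b+2*a))) by ring.
apply: mulr_ge0; first exact: mulr_ge0.
apply: addr_ge0; (apply: mulr_ge0; [apply: mulr_ge0; [done| exact: exprn_ge0] |
  apply: mulr_ge0; [exact: sqr_ge0 | lra]]).
Qed.

Lemma P_conv (R : realType) (s1 s2 t1 t2 l : R) : 0 < s1 -> 0 < s2 -> 0 < t1 -> 0 < t2 ->
  0 <= l <= 1 ->
  Num.sqrt ((l*s1+(1-l)*s2)^+3/(l*t1+(1-l)*t2)) <=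
  l*Num.sqrt(s1^+3/t1) + (1-l)*Num.sqrt(s2^+3/t2).
Proof.
move=> hs1 hs2 ht1 ht2 /andP[hl0 hl1].
set a := Num.sqrt (s1/t1); set b := Num.sqrt (s2/t2).
have ha : s1 = t1 * a^+2.
  by rewrite /a sqr_sqrtr ?divr_ge0 ?ltW // mulrC divfK // gt_eqF.
have hb : s2 = t2 * b^+2.
  by rewrite /b sqr_sqrtr ?divr_ge0 ?ltW // mulrC divfK // gt_eqF.
have a0 : 0 <= a by exact: sqrtr_ge0.
have b0 : 0 <= b by exact: sqrtr_ge0.
have e1 : Num.sqrt (s1^+3/t1) = t1 * a^+3.
  rewrite ha (_ : (t1 * a ^+ 2) ^+ 3 / t1 = (t1*a^+3)^+2); last by field; rewrite gt_eqF.
  rewrite sqrtr_sqr ger0_norm //; apply: mulr_ge0; [exact: ltW | exact: exprn_ge0].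
have e2 : Num.sqrt (s2^+3/t2) = t2 * b^+3.
  rewrite hb (_ : (t2 * b ^+ 2) ^+ 3 / t2 = (t2*b^+3)^+2); last by field; rewrite gt_eqF.
  rewrite sqrtr_sqr ger0_norm //; apply: mulr_ge0; [exact: ltW | exact: exprn_ge0].
rewrite e1 e2.
have hp : 0 <= l * t1 by apply: mulr_ge0; lra.
have hq : 0 <= (1-l) * t2 by apply: mulr_ge0; lra.
have hT : 0 < l*t1 + (1-l)*t2 by nra.
set Y := l * (t1 * a ^+ 3) + (1 - l) * (t2 * b ^+ 3).
have Y0 : 0 <= Y by rewrite /Y; apply: addr_ge0; apply: mulr_ge0; try lra;
  apply: mulr_ge0; try apply: exprn_ge0; lra.
rewrite -(ger0_norm Y0) -sqrtr_sqr ler_sqrt ?sqr_ge0 //.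
rewrite ler_pdivrMr //.
have := @poly_ineq _ _ _ a b hp hq a0 b0.
rewrite ha hb /Y.
have -> : l * (t1 * a ^+ 2) + (1 - l) * (t2 * b ^+ 2) = l * t1 * a ^+ 2 + (1 - l) * t2 * b ^+ 2 by ring.
move=> H. apply: (le_trans H). rewrite le_eqVlt; apply/orP; left; apply/eqP; ring.
Qed.

Lemma exp_conv (R : realType) (u v t : R) : 0 <= t <= 1 ->
  expR (t*u+(1-t)*v) <= t*expR u + (1-t)*expR v.
Proof.
move=> /andP[t0 t1]; set z := t*u+(1-t)*v.
have ez : 0 < expR z by exact: expR_gt0.
have A : expR z * (1 + (u - z)) <= expR u.
  have -> : expR u = expR z * expR (u - z) by rewrite -expRD addrC subrK.
  by apply: ler_wpM2l; [exact: ltW | exact: expR_ge1Dx].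
have B : expR z * (1 + (v - z)) <= expR v.
  have -> : expR v = expR z * expR (v - z) by rewrite -expRD addrC subrK.
  by apply: ler_wpM2l; [exact: ltW | exact: expR_ge1Dx].
have E : t * (expR z * (1 + (u - z))) + (1-t) * (expR z * (1 + (v - z))) = expR z.
  rewrite /z; ring.
have t1' : 0 <= 1 - t by lra.
rewrite -[X in X <= _]E; apply: lerD; apply: ler_wpM2l => //.
Qed.

Lemma inv_conv (R : realType) (x y t : R) : 0 < x -> 0 < y -> 0 <= t <= 1 ->
  (t*x+(1-t)*y)^-1 <= t/x + (1-t)/y.
Proof.
move=> x0 y0 /andP[t0 t1].
have z0 : 0 < t*x+(1-t)*y by nra.
rewrite -subr_ge0.
have -> : t/x + (1-t)/y - (t*x+(1-t)*y)^-1 = t*(1-t)*(x-y)^+2/(x*y*(t*x+(1-t)*y)).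
  by field; rewrite !gt_eqF.
apply: divr_ge0; last by apply: ltW; rewrite !mulr_gt0.
apply: mulr_ge0; last exact: sqr_ge0.
apply: mulr_ge0; lra.
Qed.

Lemma mono_sq (R : realType) (s s' t t' : R) : 0 < s -> s <= s' -> 0 < t' -> t' <= t ->
  Num.sqrt (s^+3/t) <= Num.sqrt (s'^+3/t').
Proof.
move=> s0 ss t0 tt.
have s'0 : 0 < s' by apply: lt_le_trans ss.
have t'0 : 0 < t by apply: lt_le_trans tt.
rewrite ler_sqrt; last by apply: divr_ge0; [apply: exprn_ge0|]; apply: ltW.
apply: ler_pM.
- by apply: exprn_ge0; apply: ltW.
- by rewrite invr_ge0 ltW.
- by rewrite ler_pXn2r // nnegrE ltW.
- by rewrite lef_pV2 // posrE.
Qed.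

Theorem mainTheorem3 (R : realType) (K psi Emax C : R) (I : set R) :
  (0 < K)%R -> (0 < psi)%R -> (0 < Emax)%R -> (0 < C)%R ->
  is_interval I ->
  (forall Q : R, I Q -> (1 < Q)%R /\ (C / Emax < Q)%R) ->
  (forall Q : R, I Q ->
     (0 <= 3 * psi ^+ 2 * expR psi * Q ^+ 2 - 2 * Q * Emax + C)%R) ->
  convex_on I (betaQ K psi Emax C) /\
  (forall kappa rho : R, (0 < kappa)%R -> (0 < rho < 1)%R ->
     convex_on I (fun Q => gamma_quantile kappa (betaQ K psi Emax C Q) rho)).
Proof.
move=> K0 p0 E0 C0 HI HQ _.
have hpos : forall Q, I Q -> 0 < expR (psi * Q) - expR psi.
  move=> Q /HQ [Q1 _]; rewrite subr_gt0 ltr_expR; nra.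
have gpos : forall Q, I Q -> 0 < Emax - C / Q.
  move=> Q /HQ [Q1 QE]; have Q0 : 0 < Q by lra.
  rewrite subr_gt0 ltr_pdivrMr //; move: QE; rewrite ltr_pdivrMr //; lra.
have conv1 : convex_on I (betaQ K psi Emax C).
  move=> x y t Ix Iy /andP[t0 t1].
  set z := t * x + (1 - t) * y.
  have Iz : I z.
    have [xy|yx] := leP x y.
      by apply: (HI x y) => //; apply/andP; split; rewrite /z; nra.
    by apply: (HI y x) => //; apply/andP; split; rewrite /z; nra.
  have x0 : 0 < x by have [] := HQ x Ix; lra.
  have y0 : 0 < y by have [] := HQ y Iy; lra.
  have hx := hpos x Ix; have hy := hpos y Iy; have hz := hpos z Iz.
  have gx := gpos x Ix; have gy := gpos y Iy; have gz := gpos z Iz.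
  have hconv : expR (psi * z) - expR psi <=
      t * (expR (psi * x) - expR psi) + (1 - t) * (expR (psi * y) - expR psi).
    have -> : psi * z = t * (psi * x) + (1 - t) * (psi * y) by rewrite /z; ring.
    have := @exp_conv _ (psi * x) (psi * y) t; rewrite t0 t1 => /(_ isT); lra.
  have gconv : t * (Emax - C / x) + (1 - t) * (Emax - C / y) <= Emax - C / z.
    have := @inv_conv _ x y t x0 y0; rewrite t0 t1 => /(_ isT) H.
    have H2 : C * z^-1 <= C * (t / x + (1 - t) / y).
      by apply: ler_wpM2l => //; apply: ltW.
    have -> : t * (Emax - C / x) + (1 - t) * (Emax - C / y) =
      Emax - C * (t / x + (1 - t) / y) by ring.
    rewrite /z in H2 *; lra.
  have Tpos : 0 < t * (Emax - C / x) + (1 - t) * (Emax - C / y).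
    case: (eqVneq t 0) => [->|tn0]; first by rewrite mul0r add0r subr0 mul1r.
    have tpos : 0 < t by rewrite lt_def tn0.
    apply: (lt_le_trans (y := t * (Emax - C / x))); first exact: mulr_gt0.
    rewrite lerDl; apply: mulr_ge0; [lra | exact: ltW].
  rewrite /betaQ -/z.
  apply: (le_trans (y := K * Num.sqrt (
     (t * (expR (psi * x) - expR psi) + (1 - t) * (expR (psi * y) - expR psi)) ^+ 3 /
     (t * (Emax - C / x) + (1 - t) * (Emax - C / y))))).
    by apply: ler_wpM2l; [exact: ltW | exact: mono_sq].
  rewrite [t * (K * _)]mulrCA [(1 - t) * (K * _)]mulrCA -mulrDr.
  apply: ler_wpM2l; first exact: ltW.
  apply: P_conv => //; lra.
split => // kappa rho _ _ x y t Ix Iy ht.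
rewrite /gamma_quantile.
set c := lower_gamma_inv kappa (Gamma_fn kappa * rho).
have c0 : 0 <= c.
  rewrite /c /lower_gamma_inv; case: xgetP => [v _ [hv _] | _] //.
apply: (le_trans (y := (t * betaQ K psi Emax C x + (1 - t) * betaQ K psi Emax C y) * c)).
  by apply: ler_wpM2r => //; exact: conv1.
by rewrite le_eqVlt; apply/orP; left; apply/eqP; ring.
Qed.
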